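(* Let $N\ge 1$, let $\mathbf{h}_s,\mathbf{h}_0\in\mathbb{C}^N$, let $\mathbf{R}\in\mathbb{C}^{N\times N}$ be Hermitian positive definite, and let $\bar P>0$, $P_t>0$, $\epsilon>0$. Consider the robust design problem $\mathbf{P1}$: $$\max_{\mathbf{S}\succeq 0}\ \log\big(1+\mathbf{h}_s^H\mathbf{S}\mathbf{h}_s\big)\quad\text{subject to}\quad \mathrm{tr}(\mathbf{S})\le \bar P,\ \ \mathbf{h}^H\mathbf{S}\mathbf{h}\le P_t\ \text{ for all } \mathbf{h}\in\mathbb{C}^N \text{ with } (\mathbf{h}-\mathbf{h}_0)^H\mathbf{R}^{-1}(\mathbf{h}-\mathbf{h}_0)\le\epsilon,$$ where the maximization is over Hermitian positive semidefinite $N\times N$ matrices $\mathbf{S}$. Then the optimal covariance matrix $\mathbf{S}$ of $\mathbf{P1}$ has rank one.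
   Context: $\mathbf{S}$ is the transmit covariance matrix of a secondary user with $N$ transmit antennas; $\mathbf{h}_s$ is the secondary link channel, and $\mathbf{h}$ is the (uncertain) channel to the primary user, known only to lie in the ellipsoid above with center $\mathbf{h}_0$ and shape matrix $\mathbf{R}$. *)

(* Defs.v *)
From HB Require Import structures.
From mathcomp Require Import all_boot all_order all_algebra.
From mathcomp Require Import reals exp.
From mathcomp Require Export complex.
Set Implicit Arguments. Unset Strict Implicit. Unset Printing Implicit Defensive.
Import Order.TTheory GRing.Theory Num.Theory.
Local Open Scope ring_scope.

Definition ctmx (R : rcfType) m n (A : 'M[R[i]]_(m, n)) : 'M[R[i]]_(n, m) :=
  (map_mx (@conjc R) A)^T.

Definition qform (R : rcfType) n (A : 'M[R[i]]_n) (v : 'cV[R[i]]_n) : R[i] :=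
  (ctmx v *m A *m v) ord0 ord0.

Definition hermitian (R : rcfType) n (A : 'M[R[i]]_n) : Prop := ctmx A = A.

Definition psd (R : rcfType) n (A : 'M[R[i]]_n) : Prop :=
  hermitian A /\ forall v : 'cV[R[i]]_n, 0 <= qform A v.

Definition pd (R : rcfType) n (A : 'M[R[i]]_n) : Prop :=
  hermitian A /\ forall v : 'cV[R[i]]_n, v != 0 -> 0 < qform A v.

(* Comparisons are in the (partial)
   order of the numClosedField R[i], i.e. the compared values are real. *)
Definition P1_feasible (R : realType) n (Rm : 'M[R[i]]_n) (h0 : 'cV[R[i]]_n)
    (Pbar Pt eps : R) (S : 'M[R[i]]_n) : Prop :=
  [/\ psd S, \tr S <= (Pbar%:C)%C
    & forall h : 'cV[R[i]]_n,
        qform (invmx Rm) (h - h0) <= (eps%:C)%C -> qform S h <= (Pt%:C)%C].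

(* objective of P1: log(1 + h_s^H S h_s) (natural log; h_s^H S h_s is real
   for Hermitian S, we take its real part) *)
Definition P1_obj (R : realType) n (hs : 'cV[R[i]]_n) (S : 'M[R[i]]_n) : R :=
  ln (1 + complex.Re (qform S hs)).

Definition P1_optimal (R : realType) n (Rm : 'M[R[i]]_n) (hs h0 : 'cV[R[i]]_n)
    (Pbar Pt eps : R) (S : 'M[R[i]]_n) : Prop :=
  P1_feasible Rm h0 Pbar Pt eps S /\
  forall S', P1_feasible Rm h0 Pbar Pt eps S' ->
    P1_obj hs S' <= P1_obj hs S.

(* Main.v *)
Require Import Defs.
From HB Require Import structures.
From mathcomp Require Import all_boot all_order all_algebra.
From mathcomp Require Import reals exp complex.
From mathcomp Require Import ring lra.
From mathcomp Require Import boolp classical_sets topology normedtype derive.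
Set Implicit Arguments. Unset Strict Implicit. Unset Printing Implicit Defensive.
Import Order.TTheory GRing.Theory Num.Theory numFieldNormedType.Exports.
Local Open Scope complex_scope.
Local Open Scope ring_scope.

Section Alg.
Variable R : realType.
Local Notation C := R[i].

Definition sqc (z : C) : R := complex.Re z ^+ 2 + complex.Im z ^+ 2.

Lemma sqc_ge0 z : 0 <= sqc z.
Proof. by rewrite /sqc addr_ge0 // sqr_ge0. Qed.

Lemma mulcJ z : z * (conjc z) = (sqc z)%:C.
Proof. case: z => a b; rewrite /sqc /=; simpc; apply/eqP; rewrite eq_complex /=; apply/andP; split; apply/eqP; ring. Qed.

Lemma sqcJ z : sqc (conjc z) = sqc z.
Proof. by case: z => a b; rewrite /sqc /= sqrrN. Qed.

Lemma sqcRM (r : R) z : sqc (r%:C * z) = r ^+ 2 * sqc z.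
Proof. case: z => a b; rewrite /sqc /=; simpc; rewrite /=. ring. Qed.

Lemma sqcR (r : R) : sqc r%:C = r ^+ 2.
Proof. by rewrite /sqc /= expr0n /= addr0. Qed.

Lemma sqcD z w : sqc (z + w) <= 2 * sqc z + 2 * sqc w.
Proof. case: z w => a b [c d]; rewrite /sqc /=. have := sqr_ge0 (a - c); have := sqr_ge0 (b - d). nra. Qed.

Lemma ReD (z w : C) : complex.Re (z + w) = complex.Re z + complex.Re w.
Proof. by case: z w => a b [c d]. Qed.

Lemma Re_sum m (F : 'I_m -> C) : complex.Re (\sum_j F j) = \sum_j complex.Re (F j).
Proof. by apply: (big_morph _ ReD). Qed.

Lemma sum_complex m (F : 'I_m -> C) :
  \sum_j F j = (\sum_j complex.Re (F j)) +i* (\sum_j complex.Im (F j)).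
Proof.
elim/big_rec3: _ => // j a b c _ ->.
by case: (F j) => x y.
Qed.

Lemma lec_real (z : C) (r : R) : 0 <= z -> z <= r%:C -> complex.Re z <= r.
Proof. by case: z => a b; rewrite !lecE /= => /andP[_ _] /andP[]. Qed.

Lemma ge0_real (z : C) : 0 <= z -> z = (complex.Re z)%:C.
Proof. by move=> /ger0_Im; case: z => a b /= ->. Qed.


Lemma ctmxK m p (A : 'M[C]_(m, p)) : ctmx (ctmx A) = A.
Proof. by apply/matrixP => i j; rewrite /ctmx !mxE conjcK. Qed.

Lemma ctmxM m p q (A : 'M[C]_(m, p)) (B : 'M[C]_(p, q)) :
  ctmx (A *m B) = ctmx B *m ctmx A.
Proof. by rewrite /ctmx map_mxM trmx_mul. Qed.

Lemma ctmxD m p (A B : 'M[C]_(m, p)) : ctmx (A + B) = ctmx A + ctmx B.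
Proof. by rewrite /ctmx map_mxD linearD. Qed.

Lemma ctmxZ m p (a : C) (A : 'M[C]_(m, p)) : ctmx (a *: A) = (conjc a) *: ctmx A.
Proof. by rewrite /ctmx map_mxZ linearZ. Qed.

Lemma ctmxE m p (A : 'M[C]_(m, p)) i j : ctmx A i j = (conjc (A j i)).
Proof. by rewrite /ctmx !mxE. Qed.

Definition bil n (S : 'M[C]_n) (x y : 'cV[C]_n) : C := (ctmx x *m S *m y) 0 0.

Lemma bilJ n (S : 'M[C]_n) x y : Defs.hermitian S -> bil S y x = (conjc (bil S x y)).
Proof.
move=> hS; rewrite /bil -ctmxE !ctmxM ctmxK hS mulmxA.
by rewrite !mxE; apply: eq_bigr => k _; rewrite !mxE.
Qed.


Definition ip n (h v : 'cV[C]_n) : C := (ctmx h *m v) 0 0.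
Definition vv n (v : 'cV[C]_n) := v *m ctmx v.

Lemma ipJ n (h v : 'cV[C]_n) : ip v h = conjc (ip h v).
Proof. by rewrite /ip -ctmxE ctmxM ctmxK. Qed.

Lemma mx11M n (a : 'M[C]_(1, n)) (b : 'M[C]_(n, 1)) (c : 'M[C]_(1,1)) :
  (a *m b *m c) 0 0 = (a *m b) 0 0 * c 0 0.
Proof. by rewrite [in LHS]mxE big_ord1. Qed.

Lemma qform_vv n (v h : 'cV[C]_n) : qform (vv v) h = (sqc (ip h v))%:C.
Proof.
rewrite /qform /vv !mulmxA -(mulmxA (ctmx h *m v)) mx11M.
have -> : (ctmx v *m h) = ctmx (ctmx h *m v) by rewrite ctmxM ctmxK.
by rewrite ctmxE -mulcJ.
Qed.

Lemma tr_vv n (v : 'cV[C]_n) : \tr (vv v) = (\sum_j sqc (v j 0))%:C.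
Proof.
rewrite /mxtrace rmorph_sum; apply: eq_bigr => j _.
by rewrite /vv mxE big_ord1 ctmxE mulcJ.
Qed.

Lemma psd_vv n (v : 'cV[C]_n) : psd (vv v).
Proof.
split; first by rewrite /Defs.hermitian /vv ctmxM ctmxK.
by move=> w; rewrite qform_vv ler0c sqc_ge0.
Qed.


Lemma quad_real (A B K : R) : 0 <= A -> 0 <= B -> 0 <= K ->
  (forall s, 0 <= A - 2 * s * K + s ^+ 2 * K * B) -> K <= A * B.
Proof.
move=> A0 B0 K0 H.
have [K00|Kp] := eqVneq K 0; first by rewrite K00 mulr_ge0.
have Kp' : 0 < K by rewrite lt_def Kp K0.
have [B00|Bp] := eqVneq B 0.
  have := H ((A + 1) / (2 * K)); rewrite B00 mulr0 addr0.
  have -> : 2 * ((A + 1) / (2 * K)) * K = A + 1 by field; rewrite ?Kp /=; lra.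
  lra.
have Bp' : 0 < B by rewrite lt_def Bp B0.
have := H (B^-1).
have -> : A - 2 * B^-1 * K + B^-1 ^+ 2 * K * B = (A * B - K) / B by field.
by rewrite pmulr_lge0 ?invr_gt0 // subr_ge0.
Qed.

Lemma mxDe m p (A B : 'M[C]_(m, p)) i j : (A + B) i j = A i j + B i j.
Proof. by rewrite mxE. Qed.
Lemma mxZe m p a (A : 'M[C]_(m, p)) i j : (a *: A) i j = a * A i j.
Proof. by rewrite mxE. Qed.

Lemma qform_expand n (S : 'M[C]_n) x y t :
  qform S (x + t *: y) =
  qform S x + t * bil S x y + conjc t * bil S y x + t * conjc t * qform S y.
Proof.
rewrite /qform /bil ctmxD ctmxZ !mulmxDl !mulmxDr -!scalemxAr -!scalemxAl -?scalemxAl !mxDe !mxZe.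
ring.
Qed.


Lemma Re_ge0 (z : C) : 0 <= z -> 0 <= complex.Re z.
Proof. by rewrite lecE => /andP[]. Qed.

Lemma CS n (S : 'M[C]_n) x y : psd S ->
  sqc (bil S x y) <= complex.Re (qform S x) * complex.Re (qform S y).
Proof.
case=> hS pS.
set c := bil S x y.
move: (Re_ge0 (pS x)) (Re_ge0 (pS y)) (ge0_real (pS x)) (ge0_real (pS y)).
move: (complex.Re (qform S x)) (complex.Re (qform S y)) => A B A0 B0 ea eb.
apply: quad_real => //; first exact: sqc_ge0.
move=> s; have := pS (x + (- (s%:C * conjc c)) *: y).
rewrite qform_expand (bilJ x y hS) -/c.
rewrite ea eb rmorphN rmorphM /= conjcK oppr0 -complexr0.
have -> : A%:C + - (s%:C * conjc c) * c + - (s%:C * c) * conjc c +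
    - (s%:C * conjc c) * - (s%:C * c) * B%:C
   = (A - 2 * s * sqc c + s ^+ 2 * sqc c * B)%:C.
  have eK := mulcJ c; move: (sqc c) eK => K eK.
  rewrite !(rmorphD, rmorphN, rmorphM, rmorphXn, rmorph1) /= -eK.
  ring.
by rewrite ler0c.
Qed.


Lemma ctmx0 m p : ctmx (0 : 'M[C]_(m, p)) = 0.
Proof. by apply/matrixP => i j; rewrite ctmxE !mxE conjc0. Qed.

Lemma qform0 n (A : 'M[C]_n) : qform A 0 = 0.
Proof. by rewrite /qform ctmx0 !mul0mx mxE. Qed.

Lemma pd_psd n (A : 'M[C]_n) : pd A -> psd A.
Proof.
case=> hA pA; split=> // v; have [->|v0] := eqVneq v 0; first by rewrite qform0.
exact/ltW/pA.
Qed.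

Lemma pd_unit n (A : 'M[C]_n) : pd A -> A \in unitmx.
Proof.
case=> hA pA; rewrite unitmxE unitfE; apply/negP => /det0P [v v0 vA].
have cv0 : ctmx v != 0.
  by apply: contra v0 => /eqP e; rewrite -[v]ctmxK e ctmx0.
have := pA _ cv0; rewrite /qform ctmxK vA !mul0mx mxE.
by rewrite ltxx.
Qed.

Lemma psd_inv n (A : 'M[C]_n) : pd A -> psd (invmx A).
Proof.
move=> pA; have uA := pd_unit pA; have [hA _] := pA; have [_ pA'] := pd_psd pA.
split.
  by rewrite /Defs.hermitian /ctmx map_invmx trmx_inv -/(ctmx A) hA.
move=> w; have := pA' (invmx A *m w).
have -> : qform A (invmx A *m w) = qform (invmx A) w; last by [].
rewrite /qform ctmxM.
have -> : ctmx (invmx A) = invmx A.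
  by rewrite /ctmx map_invmx trmx_inv -/(ctmx A) hA.
by rewrite -!mulmxA (mulmxA A) mulmxV // mul1mx.
Qed.

Lemma ctmx_delta n (j : 'I_n) : ctmx (delta_mx j 0 : 'cV[C]_n) = delta_mx 0 j.
Proof. by apply/matrixP => a b; rewrite ctmxE !mxE rmorph_nat andbC. Qed.

Lemma ip_delta n (j : 'I_n) (v : 'cV[C]_n) : ip (delta_mx j 0) v = v j 0.
Proof. by rewrite /ip ctmx_delta -rowE mxE. Qed.

Lemma bil_delta n (S : 'M[C]_n) (j : 'I_n) (v : 'cV[C]_n) :
  bil S (delta_mx j 0) v = (S *m v) j 0.
Proof. by rewrite /bil ctmx_delta -mulmxA -rowE mxE. Qed.

Lemma qform_delta n (S : 'M[C]_n) (j : 'I_n) : qform S (delta_mx j 0) = S j j.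
Proof. by rewrite /qform -/(bil _ _ _) bil_delta -colE mxE. Qed.

Lemma ell_bound n (A : 'M[C]_n) (u : 'cV[C]_n) (eps : R) (j : 'I_n) : pd A ->
  qform (invmx A) u <= eps%:C -> sqc (u j 0) <= eps * complex.Re (A j j).
Proof.
move=> pA ue; have uA := pd_unit pA; have [hA _] := pA; have [_ pA'] := pd_psd pA.
have piA := psd_inv pA.
have := CS u (A *m delta_mx j 0) piA.
have -> : bil (invmx A) u (A *m delta_mx j 0) = conjc (u j 0).
  rewrite /bil !mulmxA -(mulmxA _ (invmx A)) mulVmx // mulmx1.
  by rewrite -[LHS]/(ip u (delta_mx j 0)) (ipJ (delta_mx j 0) u) ip_delta.
have -> : qform (invmx A) (A *m delta_mx j 0) = A j j.
  rewrite /qform ctmxM hA !mulmxA -(mulmxA (ctmx (delta_mx j 0)) A (invmx A)) mulmxV // mulmx1.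
  by rewrite -/(qform _ _) qform_delta.
rewrite sqcJ => /le_trans; apply.
have Ajj : 0 <= complex.Re (A j j) by rewrite -qform_delta; exact/Re_ge0/pA'.
rewrite ler_wpM2r //.
apply: lec_real => //; case: piA => _; exact.
Qed.


Lemma lec_Re (z : C) (r : R) : z <= r%:C -> complex.Re z <= r.
Proof. by rewrite lecE => /andP[]. Qed.

Lemma ipZ n (h v : 'cV[C]_n) a : ip h (a *: v) = a * ip h v.
Proof. by rewrite /ip -scalemxAr mxZe. Qed.

Section Feas.
Variables (n : nat) (Rm : 'M[C]_n) (h0 : 'cV[C]_n) (Pbar Pt eps : R).

Definition feasV (v : 'cV[C]_n) :=
  (\sum_j sqc (v j 0) <= Pbar) /\
  forall h, qform (invmx Rm) (h - h0) <= eps%:C -> sqc (ip h v) <= Pt.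

Lemma feasV_P1 v : feasV v -> P1_feasible Rm h0 Pbar Pt eps (vv v).
Proof.
case=> Htr Hh; split; first exact: psd_vv.
  by rewrite tr_vv lecR.
by move=> h /Hh; rewrite qform_vv lecR.
Qed.

Lemma dominate (hs : 'cV[C]_n) S : P1_feasible Rm h0 Pbar Pt eps S ->
  0 < complex.Re (qform S hs) ->
  exists w, feasV w /\ sqc (ip hs w) = complex.Re (qform S hs).
Proof.
case=> pS trS hS; move: (complex.Re _) (ge0_real (proj2 pS hs)) => b eb b0.
set r := (Num.sqrt b)^-1.
have r2 : r ^+ 2 = b^-1 by rewrite /r exprVn sqr_sqrtr // ltW.
have ipw h : ip h (r%:C *: (S *m hs)) = r%:C * bil S h hs.
  by rewrite ipZ /ip /bil mulmxA.
have key h : sqc (ip h (r%:C *: (S *m hs))) <= complex.Re (qform S h).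
  rewrite ipw sqcRM r2 ler_pdivrMl // mulrC.
  by rewrite (le_trans (CS h hs pS)) // eb /= lexx.
exists (r%:C *: (S *m hs)); split; last first.
  rewrite ipw sqcRM r2 /bil -/(qform S hs) eb sqcR.
  by rewrite expr2 mulrA mulVf ?mul1r // gt_eqF.
split.
  apply: le_trans (lec_Re trS).
  rewrite /mxtrace Re_sum; apply: ler_sum => j _.
  by rewrite -ip_delta -qform_delta key.
move=> h /hS; move/lec_Re; apply: le_trans; exact: key.
Qed.

End Feas.


Lemma small_feas n (Rm : 'M[C]_n.+1) (h0 : 'cV[C]_n.+1) (Pbar Pt eps : R) :
  pd Rm -> 0 < Pbar -> 0 < Pt -> 0 < eps ->
  exists v, feasV Rm h0 Pbar Pt eps v /\ v != 0.
Proof.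
move=> pR Pb0 Pt0 e0.
have Rge : 0 <= complex.Re (Rm 0 0).
  by rewrite -qform_delta; apply/Re_ge0; case: (pd_psd pR) => _; exact.
set M := 2 * sqc (h0 0 0) + 2 * (eps * complex.Re (Rm 0 0)).
have M0 : 0 <= M by rewrite /M addr_ge0 ?mulr_ge0 ?sqc_ge0 // ltW.
set d := Num.min 1 (Num.min Pbar (Pt / (M + 1))).
have d0 : 0 < d by rewrite !lt_min ltr01 Pb0 divr_gt0 // ltr_wpDl.
have d1 : d <= 1 by rewrite ge_min lexx.
have dP : d <= Pbar by rewrite ge_min [X in _ || X]ge_min lexx orbT.
have dM : d * (M + 1) <= Pt.
  rewrite -ler_pdivlMr ?ltr_wpDl //.
  by rewrite ge_min [X in _ || X]ge_min lexx !orbT.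
exists (d%:C *: delta_mx 0 0); split; last first.
  apply/negP => /eqP/matrixP/(_ 0 0); rewrite !mxE /= mulr1 => /eqP.
  by rewrite eq_complex /= eqxx andbT gt_eqF.
split.
  rewrite big_ord_recl big1 => [|i _]; last first.
    by rewrite !mxE /= mulr0 /sqc /= expr0n /= addr0.
  rewrite !mxE /= mulr1 sqcR addr0; nra.
move=> h he; rewrite ipZ sqcRM ipJ ip_delta sqcJ.
have hb : sqc (h 0 0) <= M.
  have -> : h 0 0 = h0 0 0 + (h - h0) 0 0 by rewrite mxDe mxE addrC subrK.
  apply: le_trans (sqcD _ _) _; rewrite /M lerD2l ler_pM2l //.
  exact: ell_bound.
have := sqc_ge0 (h 0 0); nra.
Qed.

End Alg.

Local Open Scope classical_set_scope.

Section Topo.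
Variable R : realType.
Local Notation C := R[i].

Section Cont.
Variable k : nat.
Local Notation T := 'rV[R]_k.

Lemma contD (f g : T -> R) : continuous f -> continuous g ->
  continuous (fun x => f x + g x).
Proof. move=> hf hg x; exact: (continuousD (hf x) (hg x)). Qed.

Lemma contM (f g : T -> R) : continuous f -> continuous g ->
  continuous (fun x => f x * g x).
Proof. move=> hf hg x; exact: (continuousM (hf x) (hg x)). Qed.

Lemma contN (f : T -> R) : continuous f -> continuous (fun x => - f x).
Proof. move=> hf x; exact: (continuousN (hf x)). Qed.

Lemma contX2 (f : T -> R) : continuous f -> continuous (fun x => f x ^+ 2).
Proof.
move=> hf; have -> : (fun x => f x ^+ 2) = (fun x => f x * f x).
  by apply/funext => x; rewrite expr2.
exact: contM.
Qed.

Lemma contC (c : R) : continuous (fun _ : T => c).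
Proof. by move=> x; apply: cst_continuous. Qed.

Lemma contX (i : 'I_k) : continuous (fun x : T => x 0 i).
Proof. exact: coord_continuous. Qed.

Lemma cont_sum m (F : 'I_m -> T -> R) : (forall j, continuous (F j)) ->
  continuous (fun x => \sum_j F j x).
Proof.
move=> hF; rewrite /index_enum; elim: (Finite.enum _) => [|a s IH].
  have -> : (fun x => \sum_(j <- [::]) F j x) = (fun _ => 0).
    by apply/funext => x; rewrite big_nil.
  exact: contC.
have -> : (fun x => \sum_(j <- a :: s) F j x) =
          (fun x => F a x + \sum_(j <- s) F j x).
  by apply/funext => x; rewrite big_cons.
exact: contD.
Qed.

End Cont.


Section Vec.
Variable n : nat.
Local Notation T := 'rV[R]_(n + n).

Definition cvec (x : T) : 'cV[C]_n :=
  \col_j (x 0 (lshift n j) +i* x 0 (rshift n j)).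

Definition ReIp (h : 'cV[C]_n) (x : T) : R :=
  \sum_j (complex.Re (h j 0) * x 0 (lshift n j) + complex.Im (h j 0) * x 0 (rshift n j)).
Definition ImIp (h : 'cV[C]_n) (x : T) : R :=
  \sum_j (complex.Re (h j 0) * x 0 (rshift n j) - complex.Im (h j 0) * x 0 (lshift n j)).
Definition Qf h x := ReIp h x ^+ 2 + ImIp h x ^+ 2.
Definition Tf (x : T) := \sum_(k < n + n) x 0 k ^+ 2.

Lemma ip_cvec h x : ip h (cvec x) = ReIp h x +i* ImIp h x.
Proof.
rewrite /ip mxE sum_complex /ReIp /ImIp; congr (_ +i* _); apply: eq_bigr => j _;
  rewrite ctmxE !mxE; case: (h j 0) => a b /=; simpc; rewrite /=; ring.
Qed.

Lemma sqc_cvec h x : sqc (ip h (cvec x)) = Qf h x.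
Proof. by rewrite ip_cvec. Qed.

Lemma tr_cvec x : \sum_j sqc (cvec x j 0) = Tf x.
Proof. rewrite /Tf big_split_ord /= -big_split; apply: eq_bigr => j _; by rewrite mxE. Qed.

Lemma cvec_surj w : exists x, cvec x = w.
Proof.
exists (row_mx (\row_j complex.Re (w j 0)) (\row_j complex.Im (w j 0))).
apply/matrixP => j k; rewrite mxE row_mxEl row_mxEr !mxE (ord1 k).
by case: (w j 0).
Qed.

Lemma Qf_cont h : continuous (Qf h).
Proof.
rewrite /Qf /ReIp /ImIp.
apply: contD; apply: contX2;
  apply: cont_sum => j; apply: contD; try apply: contN;
  apply: contM; (apply: contC || apply: contX).
Qed.

Lemma Tf_cont : continuous Tf.
Proof. apply: cont_sum => j; apply: contX2; apply: contX. Qed.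

Lemma Tf_coord (x : T) (k : 'I_(n + n)) : x 0 k ^+ 2 <= Tf x.
Proof.
rewrite /Tf (bigD1 k) //= lerDl; apply: sumr_ge0 => i _; exact: sqr_ge0.
Qed.

End Vec.


Section Main.
Variables (n : nat) (Rm : 'M[C]_n.+1) (hs h0 : 'cV[C]_n.+1) (Pbar Pt eps : R).
Hypotheses (pR : pd Rm) (Pb0 : 0 < Pbar) (Pt0 : 0 < Pt) (e0 : 0 < eps).
Local Notation N := n.+1.
Local Notation T := 'rV[R]_(N + N).

Let A : set T := [set x | feasV Rm h0 Pbar Pt eps (cvec x)].
Let Ell := [set h : 'cV[C]_N | qform (invmx Rm) (h - h0) <= eps%:C].

Lemma A_eq : A = [set x | Tf x <= Pbar] `&` \bigcap_(h in Ell) [set x | Qf h x <= Pt].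
Proof.
apply/seteqP; split => x /=.
  by case; rewrite tr_cvec => ? H; split => // h /H; rewrite sqc_cvec.
by case=> ? H; split; rewrite ?tr_cvec // => h /H; rewrite sqc_cvec.
Qed.

Lemma A_closed : closed A.
Proof.
rewrite A_eq; apply: closedI.
  have -> : [set x | Tf x <= Pbar] = @Tf N @^-1` [set y | y <= Pbar] by [].
  apply: preimage_closed; last exact: closed_le.
  by move=> y _; exact: Tf_cont.
apply: closed_bigI => h _.
have -> : [set x | Qf h x <= Pt] = @Qf N h @^-1` [set y | y <= Pt] by [].
apply: preimage_closed; last exact: closed_le.
by move=> y _; exact: Qf_cont.
Qed.

Lemma A_compact : compact A.
Proof.
have cB := @rV_compact R (N + N) (fun=> `[-(Pbar + 1), Pbar + 1]%classic) (fun=> @segment_compact R _ _).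
apply: (subclosed_compact A_closed cB).
move=> x; rewrite A_eq => -[/= Tx _] i /=.
have := Tf_coord x i; rewrite in_itv /= => H.
apply/andP; split; nra.
Qed.

Lemma ip0 (h : 'cV[C]_N) : ip h 0 = 0.
Proof. by rewrite /ip mulmx0 mxE. Qed.

Lemma best_vec : exists u, [/\ feasV Rm h0 Pbar Pt eps u, u != 0 &
  forall w, feasV Rm h0 Pbar Pt eps w -> sqc (ip hs w) <= sqc (ip hs u)].
Proof.
have A0 : A !=set0.
  exists 0; rewrite /A /=.
  have -> : cvec (0 : T) = 0 by apply/matrixP => i j; rewrite !mxE.
  split; first by rewrite big1 ?ltW // => j _; rewrite mxE /sqc /= expr0n /= addr0.
  by move=> h _; rewrite ip0 /sqc /= expr0n /= addr0 ltW.
have [c cA cmax] := EVT_max_rV A0 A_compact (continuous_subspaceT (@Qf_cont N hs)).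
have cmax' w : feasV Rm h0 Pbar Pt eps w -> sqc (ip hs w) <= sqc (ip hs (cvec c)).
  have [x <-] := cvec_surj w => xA.
  by rewrite !sqc_cvec; apply: cmax; rewrite inE.
have [v [vF v0]] := small_feas h0 pR Pb0 Pt0 e0.
have [c0|cn0] := eqVneq (cvec c) 0.
  exists v; split => // w /cmax'; rewrite c0 ip0 => /le_trans; apply.
  by rewrite /sqc /= expr0n /= addr0 sqc_ge0.
exists (cvec c); split => //.
by move: cA; rewrite inE.
Qed.


Lemma main_thm : exists S : 'M[C]_N,
    P1_optimal Rm hs h0 Pbar Pt eps S /\ \rank S = 1%N.
Proof.
have [u [uF u0 umax]] := best_vec.
exists (vv u); split; last first.
  apply/eqP; rewrite eqn_leq (mulmx_max_rank u (ctmx u)) /=.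
  rewrite lt0n mxrank_eq0; apply: contra u0 => /eqP vv0.
  apply/eqP/matrixP => j k; rewrite (ord1 k) mxE.
  have := congr1 (fun M : 'M[C]_N => M j j) vv0.
  rewrite /vv mxE big_ord1 ctmxE mxE => /eqP; rewrite mulf_eq0 conjc_eq0.
  by case/orP => /eqP.
split; first exact: feasV_P1.
move=> S' S'F; rewrite /P1_obj qform_vv /=.
have [pS' _ _] := S'F.
have b0 := Re_ge0 (proj2 pS' hs).
have bu : complex.Re (qform S' hs) <= sqc (ip hs u).
  have [->|bn0] := eqVneq (complex.Re (qform S' hs)) 0; first exact: sqc_ge0.
  have bp : 0 < complex.Re (qform S' hs) by rewrite lt_def bn0 b0.
  have [w [wF <-]] := dominate (hs := hs) S'F bp.
  exact: umax.
rewrite ler_ln ?posrE ?lerD2l // ltr_wpDr // ?sqc_ge0 ?ltr01 //.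
Qed.

End Main.

End Topo.

Local Close Scope classical_set_scope.
Local Close Scope complex_scope.

Theorem lemma1 (R : realType) (n : nat) (Rm : 'M[R[i]]_n.+1)
    (hs h0 : 'cV[R[i]]_n.+1) (Pbar Pt eps : R) :
  pd Rm -> 0 < Pbar -> 0 < Pt -> 0 < eps ->
  exists S : 'M[R[i]]_n.+1,
    P1_optimal Rm hs h0 Pbar Pt eps S /\ \rank S = 1%N.
Proof. by move=> pR Pb0 Pt0 e0; exact: (main_thm hs h0 pR Pb0 Pt0 e0). Qed.
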